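(* Let $C\subseteq\mathbb{F}_q^n$ be a linear code of dimension $k\geqslant1$ and minimum distance $d$, and let $\mathbb{K}$ be a field. Suppose that the minimal $\mathbb{N}$-graded free resolution of the Stanley-Reisner ring $R(C)$ of its associated matroid starts as \[ 0\leftarrow R(C)\leftarrow S\leftarrow S(-d)^{{k\brack 1}_q}\leftarrow\cdots, \] i.e. the first free module is $S(-d)^{{k\brack 1}_q}$ with ${k\brack 1}_q=\frac{q^k-1}{q-1}$. Then $C$ is a constant weight code of weight $d$.
   Context: The minimum distance $d$ is the least number of non-zero coordinates of a non-zero codeword. A constant weight code is a linear code all of whose non-zero codewords have the same number of non-zero coordinates. Let $H_C$ be a parity check matrix of $C$ ($c\in C$ iff $cH_C^t=0$); the associated matroid $\Delta$ on $\{1,\dots,n\}$ has as independent sets the index sets of linearly independent columns of $H_C$, regarded as a simplicial complex. With $S=\mathbb{K}[x_1,\dots,x_n]$, $I_\Delta=\langle\prod_{e\in\sigma}x_e:\sigma\notin\Delta\rangle$ and $R(C)=S/I_\Delta$. $S(-j)$ is the rank one free module generated in degree $j$. *)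

(* Defs.v *)
From HB Require Import structures.
From mathcomp Require Import all_boot all_order all_algebra all_field.
From mathcomp Require Import mpoly.
Set Implicit Arguments. Unset Strict Implicit. Unset Printing Implicit Defensive.
Import GRing.Theory.
Local Open Scope ring_scope.

Definition wt (F : fieldType) (n : nat) (c : 'rV[F]_n) : nat :=
  #|[set i : 'I_n | c 0 i != 0]|.

Definition is_min_distance (F : fieldType) (n : nat) (C : {vspace 'rV[F]_n}) (d : nat) :=
  (exists2 c, c \in C & c != 0 /\ wt c = d) /\
  (forall c, c \in C -> c != 0 -> (d <= wt c)%N).

Definition constant_weight (F : fieldType) (n : nat) (C : {vspace 'rV[F]_n}) (d : nat) :=
  forall c, c \in C -> c != 0 -> wt c = d.

Definition parity_check (F : fieldType) (n r : nat) (C : {vspace 'rV[F]_n})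
  (H : 'M[F]_(r, n)) := forall c : 'rV[F]_n, (c \in C) <-> (c *m H^T = 0).

Definition cols_of (F : fieldType) (n r : nat) (H : 'M[F]_(r, n)) (s : {set 'I_n}) :
  'M[F]_(#|s|, r) := \matrix_(i < #|s|, j < r) H j (enum_val i).

(* independent sets of the matroid of H: sets of linearly independent columns *)
Definition indep (F : fieldType) (n r : nat) (H : 'M[F]_(r, n)) (s : {set 'I_n}) : bool :=
  row_free (cols_of H s).

Definition xmono (K : fieldType) (n : nat) (s : {set 'I_n}) : {mpoly K[n]} :=
  \prod_(e in s) 'X_e.

Definition in_SR_ideal (K : fieldType) (F : fieldType) (n r : nat) (H : 'M[F]_(r, n))
  (p : {mpoly K[n]}) : Prop :=
  exists a : {set 'I_n} -> {mpoly K[n]},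
    p = \sum_(s : {set 'I_n} | ~~ indep H s) a s * xmono K s.

Definition generates_SR (K : fieldType) (F : fieldType) (n r : nat) (H : 'M[F]_(r, n))
  (N : nat) (g : 'I_N -> {mpoly K[n]}) : Prop :=
  forall p : {mpoly K[n]},
    in_SR_ideal H p <-> exists a : 'I_N -> {mpoly K[n]}, p = \sum_(i < N) a i * g i.

(* The minimal graded free resolution of R(C) = S/I_Delta starts
   0 <- R(C) <- S <- S(-d)^N <- ... : i.e. I_Delta has a minimal homogeneous
   system of generators consisting of N forms of degree d (minimal = no
   homogeneous generating family of smaller size). *)
Definition first_syzygy_module_is (K : fieldType) (F : fieldType) (n r : nat)
  (H : 'M[F]_(r, n)) (d N : nat) : Prop :=
  exists g : 'I_N -> {mpoly K[n]},
    [/\ forall i, g i \is d.-homog,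
        generates_SR H g &
        forall (M : nat) (g' : 'I_M -> {mpoly K[n]}),
          (forall i, exists e, g' i \is e.-homog) -> generates_SR H g' -> (N <= M)%N].

Definition gauss1 (q k : nat) : nat := ((q ^ k - 1) %/ (q - 1))%N.

(* Main.v *)
Require Import Defs.
From HB Require Import structures.
From mathcomp Require Import all_boot all_order all_algebra all_field.
From mathcomp Require Import mpoly.
From mathcomp Require Import zify.
Set Implicit Arguments. Unset Strict Implicit. Unset Printing Implicit Defensive.
Import GRing.Theory.
Local Open Scope ring_scope.

Definition supp (F : fieldType) (n : nat) (c : 'rV[F]_n) : {set 'I_n} :=
  [set i | c 0 i != 0].

Lemma L1 (F : fieldType) (n r : nat) (C : {vspace 'rV[F]_n}) (H : 'M[F]_(r, n))
  (c : 'rV[F]_n) (s : {set 'I_n}) :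
  parity_check C H -> c \in C -> c != 0 -> supp c \subset s -> ~~ indep H s.
Proof.
move=> hpc cC c0 sub; apply/negP => hfree.
pose v := \row_(i < #|s|) c 0 (enum_val i).
have hv : v *m cols_of H s = 0.
  apply/rowP => j.
  have E := (hpc c).1 cC.
  transitivity ((c *m H^T) 0 j); last by rewrite E.
  rewrite !mxE.
  under eq_bigr do rewrite !mxE.
  rewrite -(big_enum_val (fun e => c 0 e * H j e)) /=.
  rewrite [RHS](bigID (fun e => e \in s)) /= [X in _ = _ + X]big1 ?addr0.
    by apply: eq_bigr => e _; rewrite mxE.
  move=> e es; have: e \notin supp c by apply: contra es; apply: (subsetP sub).
  by rewrite inE negbK => /eqP ->; rewrite mul0r.
move/eqP: hv; rewrite (mulmx_free_eq0 _ hfree) => /eqP hv0.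
move: c0; apply/negP; rewrite negbK; apply/eqP/rowP => e; rewrite mxE.
apply/eqP; apply: contraT => hne.
have es : e \in s by apply: (subsetP sub); rewrite inE.
move/rowP: hv0 => /(_ (enum_rank_in es e)); rewrite !mxE enum_rankK_in // => h.
by rewrite h eqxx in hne.
Qed.

Lemma L2 (F : fieldType) (n r : nat) (C : {vspace 'rV[F]_n}) (H : 'M[F]_(r, n))
  (s : {set 'I_n}) :
  parity_check C H -> ~~ indep H s -> exists c, [/\ c \in C, c != 0 & supp c \subset s].
Proof.
move=> hpc; rewrite /indep -kermx_eq0 => hk.
have [i hi] : exists i, row i (kermx (cols_of H s)) != 0.
  apply/existsP; apply: contraR hk => /existsPn hall.
  apply/eqP/row_matrixP => i; rewrite row0; exact/eqP/negbNE/hall.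
set v := row i _ in hi.
have hv : v *m cols_of H s = 0 by rewrite /v -row_mul mulmx_ker row0.
pose c := \row_(e < n) \sum_(i < #|s|) v 0 i * (enum_val i == e)%:R.
have ce : forall i, c 0 (enum_val i) = v 0 i.
  move=> i0; rewrite mxE (bigD1 i0) //= eqxx mulr1 big1 ?addr0 // => j hj.
  by rewrite (inj_eq enum_val_inj) (negbTE hj) mulr0.
exists c; split.
- apply/(hpc c).2; apply/rowP => j.
  transitivity ((v *m cols_of H s) 0 j); last by rewrite hv.
  rewrite !mxE.
  under eq_bigr do rewrite !mxE big_distrl /=.
  rewrite exchange_big /=; apply: eq_bigr => i0 _.
  rewrite (bigD1 (enum_val i0)) //= eqxx mulr1 big1 ?addr0 ?mxE //.
  by move=> e he; rewrite eq_sym (negbTE he) mulr0 mul0r.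
- apply: contra hi => /eqP c0; apply/eqP/rowP => j; rewrite -ce c0 !mxE.
  done.
- apply/subsetP => e; rewrite inE mxE => hne.
  have [j _ hj] : exists2 j, true & v 0 j * (enum_val j == e)%:R != 0.
    by apply/exists_inP; apply: contraR hne => /exists_inPn h; rewrite big1 // => j _; apply/eqP/negbNE/h.
  case: (enum_val j =P e) hj => [<- _|_]; first exact: enum_valP.
  by rewrite mulr0 eqxx.
Qed.
Definition mnm (n : nat) (s : {set 'I_n}) : 'X_{1..n} := [multinom ((i \in s) : nat) | i < n].

Lemma mnmsE n (s : {set 'I_n}) i : mnm s i = (i \in s).
Proof. by rewrite /mnm mnmE. Qed.

Lemma xmonoE (K : fieldType) n (s : {set 'I_n}) : xmono K s = 'X_[mnm s].
Proof.
rewrite mpolyXE_id /xmono big_mkcond /=; apply: eq_bigr => i _.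
by rewrite mnmsE; case: (i \in s); rewrite ?expr1 ?expr0.
Qed.

Lemma SR_supp (K : fieldType) (F : fieldType) (n r : nat) (H : 'M[F]_(r, n))
  (p : {mpoly K[n]}) m :
  in_SR_ideal H p -> m \in msupp p ->
  exists2 s, ~~ indep H s & forall e, e \in s -> (0 < m e)%N.
Proof.
case=> a -> /msupp_sum_le /flattenP [l /mapP [s]].
rewrite mem_filter => /andP [hs _] -> hm.
exists s => // e es.
move: hm; rewrite xmonoE (perm_mem (msuppMX _ _)) => /mapP [m' _ ->].
by rewrite mnmDE mnmsE es.
Qed.

Lemma caseA (F : fieldType) (n r : nat) (C : {vspace 'rV[F]_n}) (H : 'M[F]_(r, n))
  (K : fieldType) (d N : nat) (g : 'I_N -> {mpoly K[n]}) (c : 'rV[F]_n) :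
  parity_check C H -> (forall i, g i \is d.-homog) -> generates_SR H g ->
  c \in C -> c != 0 ->
  (forall c', c' \in C -> c' != 0 -> ~~ (supp c' \proper supp c)) ->
  (d < wt c)%N -> False.
Proof.
move=> hpc hhom hgen cC c0 hmin hwt.
set σ := supp c.
have dep : ~~ indep H σ by apply: (L1 hpc cC c0).
have hx : in_SR_ideal H (xmono K σ).
  exists (fun s => if s == σ then 1 else 0).
  rewrite (bigD1 σ) //= eqxx mul1r big1 ?addr0 // => s /andP [_ hs].
  by rewrite (negbTE hs) mul0r.
have [a ha] := (hgen _).1 hx.
have hm : mnm σ \in msupp (xmono K σ) by rewrite xmonoE msuppX mem_seq1.
rewrite ha in hm.
move/msupp_sum_le: hm => /flattenP [l /mapP [i _ ->]].
move=> /msuppM_le /allpairsP [[m1 m2] [/= _ hm2 hE]].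
have hg : in_SR_ideal H (g i).
  apply/(hgen (g i)).2; exists (fun j => (j == i)%:R).
  rewrite (bigD1 i) //= eqxx mul1r big1 ?addr0 // => j hj.
  by rewrite (negbTE hj) mul0r.
have [τ hτ hpos] := SR_supp hg hm2.
have hd : mdeg m2 = d := dhomog_mf (hhom i) hm2.
have sub : τ \subset σ.
  apply/subsetP => e he; have := congr1 (fun m : 'X_{1..n} => m e) hE.
  rewrite /= mnmsE mnmDE; have := hpos e he.
  case: (e \in σ) => //= h1 h2; lia.
have hcard : (#|τ| <= d)%N.
  rewrite -hd mdegE; apply: (@leq_trans (\sum_(e in τ) m2 e)).
    rewrite -sum1_card; apply: leq_sum => e he; exact: hpos.
  rewrite [X in (_ <= X)%N](bigID (mem τ)) /=; exact: leq_addr.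
have [c' [c'C c'0 c'sub]] := L2 hpc hτ.
have := hmin c' c'C c'0; rewrite properEcard (subset_trans c'sub sub) /=.
rewrite -/(wt c) (leq_ltn_trans (subset_leq_card c'sub)) //.
exact: leq_ltn_trans hcard hwt.
Qed.

Definition minb (F : finFieldType) (n : nat) (C : {vspace 'rV[F]_n}) (c : 'rV[F]_n) :=
  [&& c \in C, c != 0 & [forall c' : 'rV[F]_n, ~~ [&& c' \in C, c' != 0 & supp c' \proper supp c]]].

Lemma L3 (F : finFieldType) (n : nat) (C : {vspace 'rV[F]_n}) (c : 'rV[F]_n) (s : {set 'I_n}) :
  c \in C -> c != 0 -> supp c \subset s -> exists c0, minb C c0 && (supp c0 \subset s).
Proof.
move=> cC c0 cs.
pose P x := [&& x \in C, x != 0 & supp x \subset s].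
have Pc : P c by rewrite /P cC c0 cs.
case: (arg_minnP (fun x => #|supp x|) Pc) => x /and3P [xC x0 xs] hmin.
exists x; rewrite xs andbT /minb xC x0 /=; apply/forallP => y.
apply/negP => /and3P [yC y0 /[dup] yx]; rewrite properEcard => /andP [ysx].
by rewrite ltnNge hmin // /P yC y0 (subset_trans ysx xs).
Qed.

Lemma minb_dep (F : finFieldType) (n r : nat) (C : {vspace 'rV[F]_n}) (H : 'M[F]_(r, n)) x :
  parity_check C H -> minb C x -> ~~ indep H (supp x).
Proof. by move=> hpc /and3P [xC x0 _]; apply: (L1 hpc xC x0). Qed.

Definition SS (F : finFieldType) (n : nat) (C : {vspace 'rV[F]_n}) : {set {set 'I_n}} :=
  [set supp x | x in [set x : 'rV[F]_n | minb C x]].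

Lemma genB (F : finFieldType) (n r : nat) (C : {vspace 'rV[F]_n}) (H : 'M[F]_(r, n))
  (K : fieldType) :
  parity_check C H ->
  generates_SR H (fun i : 'I_#|SS C| => xmono K (enum_val i)).
Proof.
move=> hpc p; split.
- case=> a ->.
  pose t (s : {set 'I_n}) := odflt set0 [pick u in SS C | u \subset s].
  have ht : forall s, ~~ indep H s -> (t s \in SS C) && (t s \subset s).
    move=> s hs; have [c [cC c0 cs]] := L2 hpc hs.
    have [x /andP [hx xs]] := L3 cC c0 cs.
    rewrite /t; case: pickP => [u /andP [-> ->] //|/(_ (supp x))].
    by rewrite xs andbT /SS (imset_f _ (_ : x \in [set x | minb C x])) ?inE.
  exists (fun i => \sum_(s | ~~ indep H s && (t s == enum_val i)) a s * xmono K (s :\: t s)).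
  symmetry; under eq_bigr do rewrite big_distrl /=.
  rewrite [LHS](eq_bigr (fun i => \sum_s (if ~~ indep H s && (t s == enum_val i) then a s * xmono K s else 0))); last first.
    move=> i _; rewrite big_mkcond; apply: eq_bigr => s _.
    case: ifP => // /andP [hs /eqP he]; rewrite -he -mulrA; congr (_ * _).
    have /andP [_ hts] := ht s hs.
    by rewrite [RHS]/xmono (big_setID (t s)) /= (setIidPr hts) mulrC.
  rewrite exchange_big /= [RHS]big_mkcond; apply: eq_bigr => s _.
  case: (boolP (~~ indep H s)) => hs /=; last by rewrite big1.
  have /andP [hts _] := ht s hs.
  rewrite (bigD1 (enum_rank_in hts (t s))) //= enum_rankK_in // eqxx big1 ?addr0 //.
  move=> j hj; case: eqP; rewrite ?andbF // => hE; case/eqP: hj; apply: enum_val_inj; by rewrite enum_rankK_in.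
- case=> b ->.
  exists (fun s => \sum_(i | enum_val i == s) b i).
  rewrite [RHS]big_mkcond /=.
  rewrite [RHS](eq_bigr (fun s => \sum_i (if ~~ indep H s && (enum_val i == s) then b i * xmono K s else 0))); last first.
    move=> s _; case: ifP => hs /=; last by rewrite big1.
    by rewrite big_distrl big_mkcond.
  rewrite exchange_big /=; apply: eq_bigr => i _.
  rewrite (bigD1 (enum_val i)) //= eqxx.
  have : enum_val i \in SS C := enum_valP i.
  case/imsetP => x; rewrite inE => hx hE.
  rewrite hE (minb_dep hpc hx) /= big1 ?addr0 // => s hs.
  by rewrite eq_sym (negbTE hs) andbF.
Qed.

Lemma suppZ (F : fieldType) n (a : F) (x : 'rV[F]_n) : a != 0 -> supp (a *: x) = supp x.
Proof. by move=> a0; apply/setP => i; rewrite !inE mxE mulf_eq0 negb_or a0. Qed.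

Lemma minbZ (F : finFieldType) n (C : {vspace 'rV[F]_n}) (a : F) x :
  a != 0 -> minb C x -> minb C (a *: x).
Proof.
move=> a0 /and3P [xC x0 hx]; rewrite /minb suppZ // memvZ // scaler_eq0 (negbTE a0) x0 /=.
exact: hx.
Qed.

Lemma minbZ' (F : finFieldType) n (C : {vspace 'rV[F]_n}) (a : F) x :
  a != 0 -> x \in C -> minb C (a *: x) -> minb C x.
Proof.
move=> a0 xC /and3P [_ x0 hx]; rewrite /minb -(suppZ x a0) xC /=.
by move: x0; rewrite scaler_eq0 negb_or => /andP [_ ->].
Qed.

Lemma countB (F : finFieldType) n (C : {vspace 'rV[F]_n}) (c : 'rV[F]_n) :
  c \in C -> c != 0 -> ~~ minb C c ->
  (#|SS C| * #|F|.-1 + #|F|.-1 + 1 <= #|C|)%N.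
Proof.
move=> cC c0 cnm.
pose Min := [set x : 'rV[F]_n | minb C x].
pose E := [set a *: c | a in [set~ (0 : F)]].
pose Z := [set (0 : 'rV[F]_n)].
pose rep (u : {set 'I_n}) := odflt 0 [pick x in Min | supp x == u].
have hrep : forall u, u \in SS C -> (rep u \in Min) && (supp (rep u) == u).
  move=> u /imsetP [x hx ->]; rewrite /rep; case: pickP => [y -> //|/(_ x)].
  by rewrite hx eqxx.
pose D := setX (SS C) [set~ (0 : F)].
pose phi (p : {set 'I_n} * F) := p.2 *: rep p.1.
have hinj : {in D &, injective phi}.
  move=> [u a] [u' a']; rewrite !inE /= => /andP [hu ha] /andP [hu' ha'].
  rewrite /phi /= => hE.
  have /andP [hm /eqP hs] := hrep u hu; have /andP [_ /eqP hs'] := hrep u' hu'.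
  have eu : u = u'.
    have : supp (a *: rep u) = supp (a' *: rep u') by rewrite hE.
    by rewrite !suppZ // hs hs'.
  subst u'; congr (_, _).
  have r0 : rep u != 0 by move: hm; rewrite inE => /and3P [].
  apply/eqP; rewrite -subr_eq0; apply: contraR r0 => hab.
  have : (a - a') *: rep u == 0 by rewrite scalerBl hE subrr.
  by rewrite scaler_eq0 (negbTE hab).
have h1 : (#|SS C| * #|F|.-1 <= #|Min|)%N.
  rewrite -(cardsC1 (0 : F)) -cardsX -/D -(card_in_imset hinj).
  apply: subset_leq_card; apply/subsetP => y /imsetP [[u a]].
  rewrite inE /= => /andP [hu ha] ->; rewrite /phi /=.
  have /andP [hm _] := hrep u hu; move: hm; rewrite !inE; apply: minbZ.
  by move: ha; rewrite ?inE.
have h2 : #|E| = #|F|.-1.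
  rewrite card_imset ?cardsC1 // => a b /eqP; rewrite -subr_eq0 -scalerBl scaler_eq0 (negbTE c0) orbF subr_eq0.
  by move/eqP.
have dME : Min :&: E = set0.
  apply/setP => y; rewrite !inE; apply/negP => /andP [hy /imsetP [a]].
  rewrite !inE => ha hE; move: hy; rewrite hE => /(minbZ' ha cC); exact/negP.
have dMZ : (Min :|: E) :&: Z = set0.
  apply/setP => y; rewrite !inE; apply/negP => /andP [hyy /eqP hz]; subst y.
  case/orP: hyy => [|/imsetP [a ha hE]].
    by rewrite ?inE /minb eqxx andbF.
  move/esym/eqP: hE; rewrite scaler_eq0 (negbTE c0) orbF.
  by move: ha; rewrite !inE => /negbTE ->.
have hsub : Min :|: E :|: Z \subset [set x | x \in C].
  apply/subsetP => y; rewrite !inE => /orP [/orP [|/imsetP [a _ ->]]|/eqP ->].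
  - by case/and3P.
  - exact: memvZ.
  - exact: mem0v.
have := subset_leq_card hsub.
have -> : #|[set x | x \in C]| = #|C| by apply: eq_card => x; rewrite inE.
move=> hle; apply: leq_trans hle.
move: (cardsUI (Min :|: E) Z) (cardsUI Min E); rewrite dMZ dME !cards0 !addn0 cards1 h2.
move=> -> ->; rewrite leq_add2r leq_add2r; exact: h1.
Qed.

Theorem proposition4 (F : finFieldType) (n k d r : nat) (C : {vspace 'rV[F]_n})
  (H : 'M[F]_(r, n)) (K : fieldType) :
  (1 <= k)%N -> \dim C = k -> is_min_distance C d -> parity_check C H ->
  first_syzygy_module_is K H d (gauss1 #|F| k) ->
  constant_weight C d.
Proof.
move=> hk hdim [_ hdmin] hpc [g [hhom hgen hminN]] c cC c0.
have := hdmin c cC c0; rewrite leq_eqVlt => /orP [/eqP -> //|hlt].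
exfalso; case: (boolP (minb C c)) => hm.
  apply: (caseA hpc hhom hgen cC c0 _ hlt) => c' c'C c'0.
  move: hm => /and3P [_ _ /forallP /(_ c')]; by rewrite c'C c'0.
have hcnt := countB cC c0 hm.
have hM := hminN _ _ _ (@genB _ _ _ _ _ K hpc).
have : (gauss1 #|F| k <= #|SS C|)%N.
  apply: hM => i; exists (mdeg (mnm (enum_val i))); by rewrite xmonoE dhomogX.
rewrite card_vspace hdim in hcnt.
have q1 := card_finNzRing_gt1 F.
rewrite /gauss1 leqNgt => /negP; apply.
have hq : (0 < #|F| - 1)%N by rewrite subn_gt0.
have : ((#|SS C|).+1 <= (#|F| ^ k - 1) %/ (#|F| - 1))%N; last by [].
rewrite leq_divRL // mulSn.
move: hcnt; rewrite -subn1; lia.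
Qed.
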